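(* Let $n\ge2$ and let $M$ be a nonderogatory $d\times d$ complex matrix with minimal polynomial $\mathbf p$. Every maximal subalgebra $\mathcal B$ of $\mathcal T_{n,d}[\mathcal P(M)]$ equals $\mathfrak B(\mathbf p_+,\mathbf p_-,\boldsymbol\chi)$ for some polynomials $\mathbf p_+,\mathbf p_-,\boldsymbol\chi\in\mathbb C[X]$ with $\mathbf p_+\mathbf p_-$ dividing $\mathbf p$ and $\boldsymbol\chi$ relatively prime to $\mathbf p$.
   Context: A nonderogatory matrix is one whose minimal polynomial equals its characteristic polynomial; $\mathcal P(M)$ is the algebra of polynomials in $M$; $\mathcal T_{n,d}[\mathcal P(M)]$ is the set of $n\times n$ block Toeplitz matrices $(B_{i-j})_{i,j=0}^{n-1}$ with all $B_m\in\mathcal P(M)$. A maximal subalgebra of $\mathcal T_{n,d}[\mathcal P(M)]$ is a subalgebra (linear subspace closed under multiplication) contained in it and maximal under inclusion among such. For $\mathbf p_+,\mathbf p_-,\boldsymbol\chi$ with $\mathbf p_+\mathbf p_-\mid\mathbf p$ and $\boldsymbol\chi$ coprime to $\mathbf p$, and $\mathbf q=\mathbf p/(\mathbf p_+\mathbf p_-)$, $\mathfrak B(\mathbf p_+,\mathbf p_-,\boldsymbol\chi)$ is the set of block Toeplitz matrices $A=(A_{i-j})$ with all $A_i\in\mathcal P(M)$ such that for each $i=1,\dots,n-1$ there are polynomials $\mathbf a_i,\mathbf a_{i-n}$ with $A_i=\mathbf p_+(M)\mathbf a_i(M)$, $A_{i-n}=\mathbf p_-(M)\mathbf a_{i-n}(M)$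 and $\mathbf q\mid\mathbf a_i-\boldsymbol\chi\mathbf a_{i-n}$. *)

(* Defs.v *)
From HB Require Import structures.
From mathcomp Require Import all_boot all_order all_algebra.
Set Implicit Arguments. Unset Strict Implicit. Unset Printing Implicit Defensive.
Import Order.TTheory GRing.Theory Num.Theory.
Local Open Scope ring_scope.

Section Defs.
Variable C : fieldType.

Definition polyalg (d : nat) (M : 'M[C]_d.+1) (X : 'M[C]_d.+1) : Prop :=
  exists q : {poly C}, X = horner_mx M q.

Definition blk (n m : nat) (A : 'M[C]_(n * m)) (i j : 'I_n) : 'M[C]_m :=
  \matrix_(a < m, b < m) A (mxvec_index i a) (mxvec_index j b).

Definition is_block_toeplitz (n m : nat) (A : 'M[C]_(n * m)) (B : int -> 'M[C]_m) :=
  forall i j : 'I_n, blk A i j = B (i%:Z - j%:Z).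

Definition toeplitzP (n d : nat) (M : 'M[C]_d.+1) (A : 'M[C]_(n * d.+1)) : Prop :=
  exists B : int -> 'M[C]_d.+1,
    (forall k, polyalg M (B k)) /\ is_block_toeplitz A B.

Definition is_subalgebra (N : nat) (S : 'M[C]_N -> Prop) : Prop :=
  [/\ S 0,
      (forall A B, S A -> S B -> S (A + B)),
      (forall (c : C) A, S A -> S (c *: A)) &
      (forall A B, S A -> S B -> S (A *m B))].

Definition is_maximal_subalgebra_of (N : nat) (T S : 'M[C]_N -> Prop) : Prop :=
  [/\ is_subalgebra S,
      (forall A, S A -> T A) &
      (forall S', is_subalgebra S' -> (forall A, S' A -> T A) ->
         (forall A, S A -> S' A) -> forall A, S' A -> S A)].

Definition frakB (n d : nat) (M : 'M[C]_d.+1) (pp pm chi : {poly C})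
    (A : 'M[C]_(n * d.+1)) : Prop :=
  let q := mxminpoly M %/ (pp * pm) in
  exists B : int -> 'M[C]_d.+1,
    [/\ (forall k, polyalg M (B k)),
        is_block_toeplitz A B &
        (forall i : nat, (1 <= i <= n.-1)%N ->
           exists a1 a2 : {poly C},
             [/\ B i%:Z = horner_mx M pp *m horner_mx M a1,
                 B (i%:Z - n%:Z) = horner_mx M pm *m horner_mx M a2 &
                 q %| a1 - chi * a2])].

Definition nonderogatory (d : nat) (M : 'M[C]_d.+1) : Prop :=
  mxminpoly M = char_poly M.
End Defs.

(* Main.v *)
Require Import Defs.
From HB Require Import structures.
From mathcomp Require Import all_boot all_order all_algebra.
From mathcomp Require Import ring zify.
From Stdlib Require Import Classical.
Import Order.TTheory GRing.Theory Num.Theory.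
Local Open Scope ring_scope.
Set Implicit Arguments. Unset Strict Implicit. Unset Printing Implicit Defensive.

Section Blk.
Variables (C : fieldType) (n m : nat).

Lemma blk_mul (A B : 'M[C]_(n * m)) i j :
  blk (A *m B) i j = \sum_(k < n) blk A i k *m blk B k j.
Proof.
apply/matrixP => a b; rewrite !mxE summxE.
under [RHS]eq_bigr => k _ do rewrite mxE.
rewrite pair_big /=.
rewrite (reindex (fun kc : 'I_n * 'I_m => mxvec_index kc.1 kc.2)) /=.
  by apply: eq_bigr => -[k c] _ /=; rewrite !mxE.
apply: onW_bij; apply: inj_card_bij.
  move=> [k c] [k' c'] /= /(congr1 val) /= /val_inj /(congr1 (@enum_val _ _)).
  by rewrite !enum_rankK => -[-> ->].
by rewrite card_prod !card_ord.
Qed.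

Lemma blkD (A B : 'M[C]_(n * m)) i j : blk (A + B) i j = blk A i j + blk B i j.
Proof. by apply/matrixP => a b; rewrite !mxE. Qed.
Lemma blkZ c (A : 'M[C]_(n * m)) i j : blk (c *: A) i j = c *: blk A i j.
Proof. by apply/matrixP => a b; rewrite !mxE. Qed.
Lemma blk0 i j : blk (0 : 'M[C]_(n * m)) i j = 0.
Proof. by apply/matrixP => a b; rewrite !mxE. Qed.
End Blk.

Section Toep.
Variables (C : fieldType) (n d : nat) (M : 'M[C]_d.+1).
Local Notation m := d.+1.

Definition PP (Ba Bb : int -> 'M[C]_m) (i j : nat) :=
  \sum_(k < n) Ba (i%:Z - k%:Z) *m Bb (k%:Z - j%:Z).

Lemma PP_diff Ba Bb (i j : nat) : (0 < n)%N ->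
  PP Ba Bb i.+1 j.+1 + Ba (i.+1%:Z - n%:Z) *m Bb (n%:Z - j.+1%:Z)
  = PP Ba Bb i j + Ba i.+1%:Z *m Bb (- j.+1%:Z).
Proof.
rewrite /PP; case: n => // n' _; rewrite big_ord_recl big_ord_recr /=.
have e1 : forall a b : nat, (a.+1%:Z - b.+1%:Z) = a%:Z - b%:Z by move=> a b; lia.
rewrite (_ : i.+1%:Z - (0%N)%:Z = i.+1%:Z); last by lia.
rewrite (_ : (0%N)%:Z - j.+1%:Z = - j.+1%:Z); last by lia.
rewrite (_ : i.+1%:Z - n'.+1%:Z = i%:Z - n'%:Z); last by lia.
rewrite (_ : n'.+1%:Z - j.+1%:Z = n'%:Z - j%:Z); last by lia.
set S1 := \sum_(k < n') _.
set S2 := \sum_(k < n') _.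
have -> : S1 = S2.
  by apply: eq_bigr => k _; rewrite /bump /= !add1n !e1.
by rewrite [LHS]addrAC [LHS]addrC [RHS]addrAC -addrA.
Qed.

Definition Cc Ba Bb (k : int) : 'M[C]_m :=
  match k with Posz k => PP Ba Bb k 0 | Negz k => PP Ba Bb 0 k.+1 end.

Lemma toep_blk_mul (A B : 'M[C]_(n * m)) Ba Bb :
  is_block_toeplitz A Ba -> is_block_toeplitz B Bb ->
  forall i j : 'I_n, blk (A *m B) i j = PP Ba Bb i j.
Proof.
move=> hA hB i j; rewrite blk_mul; apply: eq_bigr => k _.
by rewrite hA hB.
Qed.

Definition tcond (Ba Bb : int -> 'M[C]_m) := forall u v : nat,
  (0 < u < n)%N -> (0 < v < n)%N ->
  Ba u%:Z *m Bb (v%:Z - n%:Z) = Ba (u%:Z - n%:Z) *m Bb v%:Z.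

Lemma PP_step Ba Bb (i j : nat) : tcond Ba Bb -> (i.+1 < n)%N -> (j.+1 < n)%N ->
  PP Ba Bb i.+1 j.+1 = PP Ba Bb i j.
Proof.
move=> hc hi hj.
have := PP_diff Ba Bb i j (ltn_trans (ltn0Sn _) hi).
have := hc i.+1 (n - j.+1)%N; rewrite hi ltn0Sn /=.
have -> : (0 < n - j.+1 < n)%N by apply/andP; split; lia.
move=> /(_ isT isT).
rewrite (_ : (n - j.+1)%N%:Z - n%:Z = - j.+1%:Z); last by lia.
rewrite (_ : (n - j.+1)%N%:Z = n%:Z - j.+1%:Z); last by lia.
move=> ->; by move/addIr.
Qed.

Lemma toep_mul_toep (A B : 'M[C]_(n * m)) Ba Bb :
  is_block_toeplitz A Ba -> is_block_toeplitz B Bb -> tcond Ba Bb ->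
  is_block_toeplitz (A *m B) (Cc Ba Bb).
Proof.
move=> hA hB hc i j; rewrite (toep_blk_mul hA hB).
have : (i < n)%N := ltn_ord i; have : (j < n)%N := ltn_ord j.
move: (nat_of_ord i) (nat_of_ord j) => {i j} i j.
elim: j i => [|j IH] i hj hi.
  by rewrite subr0.
case: i hi => [|i] hi.
  by rewrite sub0r /=.
rewrite PP_step // IH; try lia.
by rewrite (_ : i.+1%:Z - j.+1%:Z = i%:Z - j%:Z) //; lia.
Qed.

Lemma toep_cond (A B : 'M[C]_(n * m)) Ba Bb Bc :
  is_block_toeplitz A Ba -> is_block_toeplitz B Bb ->
  is_block_toeplitz (A *m B) Bc -> tcond Ba Bb.
Proof.
move=> hA hB hc u v /andP[u0 un] /andP[v0 vn].
have n0 : (0 < n)%N by lia.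
set i := u.-1; set j := (n - v).-1.
have hij : forall a b : nat, (a < n)%N -> (b < n)%N ->
    PP Ba Bb a b = Bc (a%:Z - b%:Z).
  move=> a b ha hb.
  by have := hc (Ordinal ha) (Ordinal hb); rewrite (toep_blk_mul hA hB).
have hs : PP Ba Bb i.+1 j.+1 = PP Ba Bb i j.
  rewrite !hij; try lia.
  by rewrite (_ : i.+1%:Z - j.+1%:Z = i%:Z - j%:Z) //; lia.
have := PP_diff Ba Bb i j n0; rewrite hs => /addrI.
rewrite (_ : i.+1 = u); last by lia.
rewrite (_ : n%:Z - j.+1%:Z = v%:Z); last by lia.
rewrite (_ : - j.+1%:Z = v%:Z - n%:Z); last by lia.
by move=> ->.
Qed.

Lemma polyalg0 : polyalg M 0.
Proof. by exists 0; rewrite rmorph0. Qed.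
Lemma polyalgD X Y : polyalg M X -> polyalg M Y -> polyalg M (X + Y).
Proof. by move=> [p ->] [q ->]; exists (p + q); rewrite rmorphD. Qed.
Lemma polyalgM X Y : polyalg M X -> polyalg M Y -> polyalg M (X *m Y).
Proof. by move=> [p ->] [q ->]; exists (p * q); rewrite rmorphM mulmxE. Qed.
Lemma polyalgZ c X : polyalg M X -> polyalg M (c *: X).
Proof.
move=> [p ->]; exists (c%:P * p).
by rewrite rmorphM /= horner_mx_C -mulmxE mul_scalar_mx.
Qed.
Lemma polyalg_sum (I : Type) (r : seq I) (F : I -> 'M[C]_m) :
  (forall k, polyalg M (F k)) -> polyalg M (\sum_(k <- r) F k).
Proof.
move=> hF; elim: r => [|a r IH]; first by rewrite big_nil; exact: polyalg0.
by rewrite big_cons; apply: polyalgD.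
Qed.
Lemma polyalg_comm X Y : polyalg M X -> polyalg M Y -> X *m Y = Y *m X.
Proof. by move=> [p ->] [q ->]; rewrite !mulmxE -!rmorphM mulrC. Qed.

Definition FF (Lp : 'M[C]_m -> 'M[C]_m -> Prop) (A : 'M[C]_(n * m)) : Prop :=
  exists B : int -> 'M[C]_m,
    [/\ (forall k, polyalg M (B k)),
        is_block_toeplitz A B &
        (forall i : nat, (1 <= i <= n.-1)%N -> Lp (B i%:Z) (B (i%:Z - n%:Z)))].

Section FSub.
Variable Lp : 'M[C]_m -> 'M[C]_m -> Prop.
Hypothesis L0 : Lp 0 0.
Hypothesis LD : forall X Y X' Y', Lp X Y -> Lp X' Y' -> Lp (X + X') (Y + Y').
Hypothesis LM : forall X Y R, polyalg M R -> Lp X Y -> Lp (X *m R) (Y *m R).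
Hypothesis LI : forall X Y X' Y', Lp X Y -> Lp X' Y' -> X *m Y' = Y *m X'.

Lemma Lsum (r : seq nat) (X Y : nat -> 'M[C]_m) :
  (forall k, k \in r -> Lp (X k) (Y k)) ->
  Lp (\sum_(k <- r) X k) (\sum_(k <- r) Y k).
Proof.
elim: r => [|a r IH] h; first by rewrite !big_nil.
rewrite !big_cons; apply: LD; first by apply: h; rewrite inE eqxx.
by apply: IH => k hk; apply: h; rewrite inE hk orbT.
Qed.

Lemma PP_polyalg Ba Bb i j : (forall k, polyalg M (Ba k)) ->
  (forall k, polyalg M (Bb k)) -> polyalg M (PP Ba Bb i j).
Proof. by move=> ha hb; apply: polyalg_sum => k; apply: polyalgM. Qed.

Lemma FF_sub : is_subalgebra (FF Lp).
Proof.
split.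
- exists (fun _ => 0); split => //; first by move=> _; exact: polyalg0.
  by move=> i j; rewrite blk0.
- move=> A B [Ba [ha tA la]] [Bb [hb tB lb]].
  exists (fun k => Ba k + Bb k); split.
  + by move=> k; apply: polyalgD.
  + by move=> i j; rewrite blkD tA tB.
  + by move=> i hi; apply: LD; [apply: la | apply: lb].
- move=> c A [Ba [ha tA la]].
  exists (fun k => c *: Ba k); split.
  + by move=> k; apply: polyalgZ.
  + by move=> i j; rewrite blkZ tA.
  + move=> i hi; rewrite -!mul_mx_scalar; apply: LM; last by apply: la.
    by exists c%:P; rewrite horner_mx_C.
- move=> A B [Ba [ha tA la]] [Bb [hb tB lb]].
  have tc : tcond Ba Bb.
    move=> u v hu hv; apply: LI; [apply: la | apply: lb]; lia.
  exists (Cc Ba Bb); split.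
  + by case=> k /=; apply: PP_polyalg.
  + exact: toep_mul_toep.
  + move=> i hi.
    have -> : i%:Z - n%:Z = Negz (n - i).-1 by rewrite NegzE; lia.
    rewrite /Cc prednK; last by lia.
    rewrite /PP.
    rewrite -(big_mkord xpredT (fun k : nat => Ba (i%:Z - k%:Z) *m Bb (k%:Z - (0%N)%:Z))).
    rewrite -(big_mkord xpredT (fun k : nat => Ba ((0%N)%:Z - k%:Z) *m Bb (k%:Z - (n - i)%N%:Z))).
    rewrite (big_cat_nat _ (n := i)) //=; last by lia.
    rewrite (big_cat_nat _ (n := (n - i)%N) (m := 0%N) (p := n) (F := fun k : nat => Ba ((0%N)%:Z - k%:Z) *m Bb (k%:Z - (n - i)%N%:Z))) //=; last by lia.
    rewrite [X in Lp _ X]addrC; apply: LD.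
    * rewrite (big_addn 0 n (n - i)).
      rewrite (_ : (n - (n - i))%N = i); last by lia.
      apply: Lsum => k; rewrite mem_index_iota => hk.
      rewrite (_ : (k + (n - i))%N%:Z - (n - i)%N%:Z = k%:Z); last by lia.
      rewrite (_ : (0%N)%:Z - (k + (n - i))%N%:Z = (i - k)%N%:Z - n%:Z); last by lia.
      rewrite (_ : i%:Z - k%:Z = (i - k)%N%:Z); last by lia.
      rewrite (_ : k%:Z - (0%N)%:Z = k%:Z); last by lia.
      apply: LM; first exact: hb.
      by apply: la; lia.
    * rewrite (big_addn 0 n i).
      apply: Lsum => k; rewrite mem_index_iota => hk.
      rewrite (_ : (0%N)%:Z - k%:Z = i%:Z - (k + i)%N%:Z); last by lia.
      rewrite (_ : k%:Z - (n - i)%N%:Z = (k + i)%N%:Z - n%:Z); last by lia.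
      rewrite (_ : (k + i)%N%:Z - (0%N)%:Z = (k + i)%N%:Z); last by lia.
      rewrite (polyalg_comm (ha _) (hb _)) (polyalg_comm (ha _) (hb _)).
      apply: LM; first exact: ha.
      by apply: lb; lia.
Qed.
End FSub.
End Toep.

Lemma ideal_gen (C : fieldType) (p : {poly C}) (I : {poly C} -> Prop) :
  (forall x y, I x -> I y -> I (x + y)) -> (forall c x, I x -> I (c * x)) ->
  I p -> p != 0 -> exists g, [/\ I g, g != 0 & forall x, I x -> g %| x].
Proof.
move=> hD hM hp p0.
suff: forall N (g : {poly C}), (size g <= N)%N -> I g -> g != 0 ->
  exists g, [/\ I g, g != 0 & forall x, I x -> g %| x] by move=> /(_ (size p) p (leqnn _) hp p0).
elim=> [|N IH] g hs hg g0.
  by move: g0; rewrite -size_poly_eq0; move: hs; rewrite leqn0 => ->.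
case: (classic (exists x, I x /\ ~~ (g %| x))) => [[x [hx hn]]|hno]; last first.
  exists g; split => // x hx; apply/negPn/negP => hn; apply: hno; exists x; split => //.
apply: (IH (x %% g)).
- have h : (size (x %% g)%R < size g)%N by rewrite ltn_modp.
  by rewrite -ltnS (leq_trans h hs).
- have -> : x %% g = x + (- (x %/ g)) * g by rewrite {2}(divp_eq x g) mulNr addrC addKr.
  by apply: hD => //; apply: hM.
- by move: hn; rewrite /dvdp.
Qed.

Section Lattice.
Variables (C : numClosedFieldType) (p : {poly C}).
Hypothesis p0 : p != 0.
Variable W : {poly C} -> {poly C} -> Prop.
Hypothesis Wiso : forall x y x' y', W x y -> W x' y' -> p %| x * y' - y * x'.

Definition submod (P : {poly C} -> {poly C} -> Prop) :=
  [/\ (forall x y x' y', P x y -> P x' y' -> P (x + x') (y + y')),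
      (forall c x y, P x y -> P (c * x) (c * y)),
      (forall x y, W x y -> P x y), P p 0 & P 0 p].

Definition LL x y := forall P, submod P -> P x y.

Lemma LL_sub : submod LL.
Proof.
split.
- by move=> x y x' y' h1 h2 P hP; case: (hP) => hD _ _ _ _; apply: hD; [apply: h1|apply: h2].
- by move=> c x y h P hP; case: (hP) => _ hM _ _ _; apply: hM; apply: h.
- by move=> x y h P [_ _ hW _ _]; apply: hW.
- by move=> P [].
- by move=> P [].
Qed.

Lemma LL_iso x y x' y' : LL x y -> LL x' y' -> p %| x * y' - y * x'.
Proof.
have step1 : forall x' y', W x' y' -> forall x y, LL x y -> p %| x * y' - y * x'.
  move=> a b hw x0 y0 h; apply: (h (fun x y => p %| x * b - y * a)); split.
  - move=> x1 y1 x2 y2 h1 h2.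
    have -> : (x1 + x2) * b - (y1 + y2) * a = (x1 * b - y1 * a) + (x2 * b - y2 * a) by ring.
    by apply: dvdp_add.
  - move=> c x1 y1 h1.
    have -> : c * x1 * b - c * y1 * a = c * (x1 * b - y1 * a) by ring.
    by apply: dvdp_mull.
  - by move=> x1 y1 h1; apply: Wiso.
  - by rewrite mul0r subr0 dvdp_mulIl.
  - by rewrite mul0r sub0r dvdpNr dvdp_mulIl.
move=> hxy h'; move: x y hxy.
apply: (h' (fun x' y' => forall x y, LL x y -> p %| x * y' - y * x')); split.
- move=> x1 y1 x2 y2 h1 h2 x y h.
  have -> : x * (y1 + y2) - y * (x1 + x2) = (x * y1 - y * x1) + (x * y2 - y * x2) by ring.
  by apply: dvdp_add; [apply: h1 | apply: h2].
- move=> c x1 y1 h1 x y h.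
  have -> : x * (c * y1) - y * (c * x1) = c * (x * y1 - y * x1) by ring.
  by apply: dvdp_mull; apply: h1.
- by move=> x1 y1 hw x y h; apply: step1.
- by move=> x y _; rewrite mulr0 sub0r dvdpNr dvdp_mulIr.
- by move=> x y _; rewrite mulr0 subr0 dvdp_mulIr.
Qed.

Lemma lattice_main : exists pp pm chi : {poly C},
  [/\ pp * pm %| p, coprimep chi p &
      forall x y, W x y -> exists a1 a2,
        [/\ x = pp * a1, y = pm * a2 & p %/ (pp * pm) %| a1 - chi * a2]].
Proof.
case: LL_sub => LD LM LW Lp0 L0p.
have [e [[f hef] e0 he]] : exists e, [/\ exists f, LL e f, e != 0 &
    forall x y, LL x y -> e %| x].
  have hD1 : forall x y, (exists z, LL x z) -> (exists z, LL y z) -> exists z, LL (x + y) z.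
    by move=> x y [a ha] [b hb]; exists (a + b); apply: LD.
  have hM1 : forall c x, (exists z, LL x z) -> exists z, LL (c * x) z.
    by move=> c x [a ha]; exists (c * a); apply: LM.
  have [e [[f hef] e0 he]] := ideal_gen hD1 hM1 (ex_intro _ 0 Lp0) p0.
  by exists e; split; [exists f| |move=> x y h; apply: he; exists y].
have hD2 : forall x y, LL 0 x -> LL 0 y -> LL 0 (x + y).
  by move=> x y hx hy; have := LD _ _ _ _ hx hy; rewrite addr0.
have hM2 : forall c x, LL 0 x -> LL 0 (c * x).
  by move=> c x hx; have := LM c _ _ hx; rewrite mulr0.
have [h [hh h0 hdh]] := ideal_gen hD2 hM2 L0p p0.
have ep : e %| p by apply: (he _ 0).
set h2 := p %/ e.
have ph2 : p = h2 * e by rewrite divpK.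
have h20 : h2 != 0 by apply: contraNneq p0 => h2z; rewrite ph2 h2z mul0r.
have peh : p %| e * h by have := LL_iso hef hh; rewrite mulr0 subr0.
have h2h : h2 %| h.
  by rewrite -(dvdp_mul2r _ _ e0) -ph2 mulrC.
set g := gcdp h2 f.
have g0 : g != 0 by rewrite gcdp_eq0 negb_and h20.
set h' := h2 %/ g; set f' := f %/ g.
have eh2 : h2 = h' * g by rewrite divpK // dvdp_gcdl.
have ef : f = f' * g by rewrite divpK // dvdp_gcdr.
have cop : coprimep h' f' by apply: coprimep_div_gcd; rewrite h20.
have h'0 : h' != 0 by apply: contraNneq h20 => hz; rewrite eh2 hz mul0r.
have [[u1 u2] /= hu] : exists u : {poly C} * {poly C}, u.1 * f' + u.2 * h' = 1.
  by apply/Bezout_eq1_coprimepP; rewrite coprimep_sym.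
set r := gdcop h' p.
have [[v1 v2] /= hv] : exists u : {poly C} * {poly C}, u.1 * r + u.2 * h' = 1.
  by apply/Bezout_eq1_coprimepP; apply: coprimep_gdco.
set chi := u1 * v1 * r + v2 * h'.
have pE : p = h' * (e * g) by rewrite ph2 eh2; ring.
exists e, g, chi; split.
- by rewrite pE dvdp_mull.
- apply/negPn/negP => hnc.
  have : size (gcdp chi p) != 1%N by move: hnc; rewrite /coprimep.
  move/closed_rootP => [x]; rewrite root_gcd => /andP[rc rp].
  have hc : (u1 * v1 * r + v2 * h').[x] = 0 by apply/rootP.
  have hu' := congr1 (horner^~ x) hu; have hv' := congr1 (horner^~ x) hv.
  rewrite /= !hornerE in hu' hv' hc.
  case: (boolP (root h' x)) => hx.
    rewrite (rootP hx) !mulr0 !addr0 in hu' hv' hc.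
    rewrite -mulrA hv' mulr1 in hc.
    by move: hu'; rewrite hc mul0r => /eqP; rewrite eq_sym oner_eq0.
  have hr : root r x by rewrite /r root_gdco // rp hx.
  rewrite (rootP hr) !mulr0 !add0r in hv' hc.
  by move: hc; rewrite hv' => /eqP; rewrite oner_eq0.
- move=> x y hw.
  have hL := LW _ _ hw.
  set c := x %/ e.
  have xE : x = c * e by rewrite divpK // (he _ y).
  have hL2 : LL 0 (y - c * f).
    have := LD _ _ _ _ hL (LM (- c) _ _ hef).
    by rewrite !mulNr -xE subrr.
  have : h2 %| y - c * f by apply: dvdp_trans h2h (hdh _ hL2).
  move=> /dvdpP [dd hdd].
  exists c, (c * f' + dd * h'); split.
  + by rewrite xE mulrC.
  + have -> : y = (y - c * f) + c * f by rewrite subrK.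
    by rewrite hdd eh2 ef; ring.
  + rewrite pE mulpK ?mulf_neq0 //.
    apply/dvdpP; exists (c * (u2 + v2 - u2 * v2 * h' - v2 * f') - chi * dd).
    apply/eqP; rewrite -subr_eq0; apply/eqP.
    have key : u1 * v1 * r * f' = (1 - u2 * h') * (1 - v2 * h').
      have e1 : u1 * f' = 1 - u2 * h' by rewrite -hu addrK.
      have e2 : v1 * r = 1 - v2 * h' by rewrite -hv addrK.
      by rewrite -e1 -e2; ring.
    have -> : c - chi * (c * f' + dd * h') -
        (c * (u2 + v2 - u2 * v2 * h' - v2 * f') - chi * dd) * h'
        = c * ((1 - u2 * h') * (1 - v2 * h') - u1 * v1 * r * f').
      by rewrite /chi; ring.
    by rewrite key subrr mulr0.
Qed.
End Lattice.

Theorem theorem7p5 (C : numClosedFieldType) (n d : nat) (M : 'M[C]_d.+1)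
    (Hn : (2 <= n)%N) (HM : nonderogatory M)
    (S : 'M[C]_(n * d.+1) -> Prop)
    (HS : is_maximal_subalgebra_of (@toeplitzP C n d M) S) :
  exists pp pm chi : {poly C},
    [/\ pp * pm %| mxminpoly M,
        coprimep chi (mxminpoly M) &
        forall A, S A <-> @frakB C n d M pp pm chi A].
Proof.
have p0 : mxminpoly M != 0 by rewrite monic_neq0 // mxminpoly_monic.
case: HS => [[S0 SD SZ SM] ST Smax].
pose W := fun x y : {poly C} => exists A B (i : nat),
  [/\ S A, (forall k, polyalg M (B k)) /\ is_block_toeplitz A B, (0 < i < n)%N,
      horner_mx M x = B i%:Z & horner_mx M y = B (i%:Z - n%:Z)].
have Wiso : forall x y x' y', W x y -> W x' y' ->
    mxminpoly M %| x * y' - y * x'.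
  move=> x y x' y' [A [Ba [i [hA [hba tA] hi hx hy]]]]
    [A' [Bb [j [hA' [hbb tA'] hj hx' hy']]]].
  have [Bc [_ tc]] := ST _ (SM _ _ hA hA').
  have := toep_cond tA tA' tc; move/(_ i j hi hj) => e.
  apply/mxminpoly_minP.
  by rewrite rmorphB !rmorphM /= hx hy hx' hy' -!mulmxE e subrr.
have [pp [pm [chi [hdiv hcop hW]]]] := lattice_main p0 Wiso.
exists pp, pm, chi; split => //.
pose Lp0 := fun X Y : 'M[C]_d.+1 => exists a1 a2 : {poly C},
  [/\ X = horner_mx M pp *m horner_mx M a1, Y = horner_mx M pm *m horner_mx M a2
    & mxminpoly M %/ (pp * pm) %| a1 - chi * a2].
pose F := fun A : 'M[C]_(n * d.+1) => FF M Lp0 A.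
have hsub : is_subalgebra F.
  apply: FF_sub.
  - exists 0, 0; rewrite !rmorph0 !mulmx0 mulr0 subr0 dvdp0; split => //.
  - move=> X Y X' Y' [a1 [a2 [-> -> h]]] [b1 [b2 [-> -> h']]].
    exists (a1 + b1), (a2 + b2); rewrite !rmorphD !mulmxDr; split => //.
    have -> : a1 + b1 - chi * (a2 + b2) = (a1 - chi * a2) + (b1 - chi * b2) by ring.
    by apply: dvdp_add.
  - move=> X Y R [r ->] [a1 [a2 [-> -> h]]].
    exists (a1 * r), (a2 * r); split.
    + by rewrite !rmorphM /= !mulmxE !mulrA.
    + by rewrite !rmorphM /= !mulmxE !mulrA.
    have -> : a1 * r - chi * (a2 * r) = (a1 - chi * a2) * r by ring.
    by apply: dvdp_mulr.
  - move=> X Y X' Y' [a1 [a2 [-> -> h]]] [b1 [b2 [-> -> h']]].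
    apply/eqP; rewrite -subr_eq0; apply/eqP.
    have -> : horner_mx M pp *m horner_mx M a1 *m (horner_mx M pm *m horner_mx M b2) -
      horner_mx M pm *m horner_mx M a2 *m (horner_mx M pp *m horner_mx M b1) =
      horner_mx M (pp * a1 * (pm * b2) - pm * a2 * (pp * b1)).
      by rewrite rmorphB !rmorphM /= !mulmxE.
    apply/mxminpoly_minP.
    have -> : pp * a1 * (pm * b2) - pm * a2 * (pp * b1) =
      ((a1 - chi * a2) * b2 - a2 * (b1 - chi * b2)) * (pp * pm) by ring.
    rewrite -{1}(divpK hdiv); apply: dvdp_mul => //.
    by apply: dvdp_sub; [apply: dvdp_mulr | apply: dvdp_mull].
have hFT : forall A, F A -> toeplitzP M A.
  by move=> A [B [hB tB _]]; exists B.
have hSF : forall A, S A -> F A.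
  move=> A hA; have [B [hB tB]] := ST _ hA; exists B; split => // i /andP[i1 i2].
  have [x hx] := hB i%:Z; have [y hy] := hB (i%:Z - n%:Z).
  have hw : W x y.
    by exists A, B, i; split => //; apply/andP; split; lia.
  have [a1 [a2 [xE yE hq]]] := hW _ _ hw.
  exists a1, a2; split => //.
  + by rewrite hx xE rmorphM /= mulmxE.
  + by rewrite hy yE rmorphM /= mulmxE.
have hFS : forall A, F A -> S A := Smax _ hsub hFT hSF.
by move=> A; split => hA; [exact: hSF | exact: hFS].
Qed.
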